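(* Let $\Phi:(X,d^X,\mu,T)\to(Y,d^Y,\nu,S)$ be a Borel factor map of compact model p.-p. systems, and let $\varepsilon>0$. Then there is $L<\infty$ such that for all sufficiently large $N\in\mathbb{N}$ there is a compact subset $X_0\subseteq X$ with $\mu(X_0)>1-\varepsilon$ such that $\Phi|_{X_0}$ is continuous and is $(\varepsilon N)$-almost $L$-Lipschitz both as a map $(X_0,d^{\mathbf{X}}_{[-N;0)})\to(Y,d^{\mathbf{Y}}_{[-N;0)})$ and as a map $(X_0,d^{\mathbf{X}}_{[0;N)})\to(Y,d^{\mathbf{Y}}_{[0;N)})$.
   Context: Compact model p.-p. system $(X,d^X,\mu,T)$: compact metric space, homeomorphism $T$, $T$-invariant Borel probability $\mu$. $d^{\mathbf{X}}_F(x,x')=\sum_{n\in F}d^X(T^nx,T^nx')$ for finite $F\subseteq\mathbb{Z}$. A Borel factor map is a Borel $\Phi$ with $\Phi\circ T=S\circ\Phi$ $\mu$-a.e. and $\Phi_*\mu=\nu$. A map $f$ between (pseudo)metric spaces is $c$-almost $L$-Lipschitz if $d(f(x),f(x'))\le Ld(x,x')+c$ for all $x,x'$. *)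

(* Defs.v *)
From Stdlib Require Import Reals.
Open Scope R_scope.

Section Defs.

Context {X : Type}.

Definition is_metric (d : X -> X -> R) : Prop :=
  (forall x y, 0 <= d x y) /\
  (forall x y, d x y = 0 <-> x = y) /\
  (forall x y, d x y = d y x) /\
  (forall x y z, d x z <= d x y + d y z).

Definition is_open (d : X -> X -> R) (U : X -> Prop) : Prop :=
  forall x, U x -> exists r, 0 < r /\ forall y, d x y < r -> U y.

Definition is_compact (d : X -> X -> R) (K : X -> Prop) : Prop :=
  forall (I : Type) (U : I -> X -> Prop),
    (forall i, is_open d (U i)) ->
    (forall x, K x -> exists i, U i x) ->
    exists l : list I, forall x, K x -> exists i, List.In i l /\ U i x.

Definition compact_space (d : X -> X -> R) : Prop :=
  is_compact d (fun _ => True).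

Definition sigma_algebra (F : (X -> Prop) -> Prop) : Prop :=
  F (fun _ => True) /\
  (forall A, F A -> F (fun x => ~ A x)) /\
  (forall A : nat -> X -> Prop, (forall n, F (A n)) ->
     F (fun x => exists n, A n x)).

Definition borel (d : X -> X -> R) (A : X -> Prop) : Prop :=
  forall F, sigma_algebra F -> (forall U, is_open d U -> F U) -> F A.

(* mu is a Borel probability measure (its values off Borel sets are irrelevant). *)
Definition borel_prob (d : X -> X -> R) (mu : (X -> Prop) -> R) : Prop :=
  (forall A, borel d A -> 0 <= mu A) /\
  mu (fun _ => True) = 1 /\
  (forall A : nat -> X -> Prop,
     (forall n, borel d (A n)) ->
     (forall n m x, n <> m -> A n x -> A m x -> False) ->
     infinite_sum (fun n => mu (A n)) (mu (fun x => exists n, A n x))).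

End Defs.

Definition continuous_on {X Y : Type} (dX : X -> X -> R) (dY : Y -> Y -> R)
  (f : X -> Y) (K : X -> Prop) : Prop :=
  forall x, K x -> forall eps, 0 < eps -> exists delta, 0 < delta /\
    forall y, K y -> dX x y < delta -> dY (f x) (f y) < eps.

Definition is_homeo {X : Type} (d : X -> X -> R) (T Tinv : X -> X) : Prop :=
  continuous_on d d T (fun _ => True) /\
  continuous_on d d Tinv (fun _ => True) /\
  (forall x, Tinv (T x) = x) /\ (forall x, T (Tinv x) = x).

Definition cmpp_system {X : Type} (d : X -> X -> R) (mu : (X -> Prop) -> R)
  (T Tinv : X -> X) : Prop :=
  is_metric d /\ compact_space d /\ is_homeo d T Tinv /\ borel_prob d mu /\
  (forall A, borel d A -> mu (fun x => A (T x)) = mu A).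

Definition borel_measurable {X Y : Type} (dX : X -> X -> R) (dY : Y -> Y -> R)
  (f : X -> Y) : Prop :=
  forall B, borel dY B -> borel dX (fun x => B (f x)).

Definition borel_factor_map {X Y : Type} (dX : X -> X -> R) (mu : (X -> Prop) -> R)
  (T : X -> X) (dY : Y -> Y -> R) (nu : (Y -> Prop) -> R) (S : Y -> Y)
  (Phi : X -> Y) : Prop :=
  borel_measurable dX dY Phi /\
  (exists Z, borel dX Z /\ mu Z = 0 /\
     forall x, ~ Z x -> Phi (T x) = S (Phi x)) /\
  (forall B, borel dY B -> mu (fun x => B (Phi x)) = nu B).

Fixpoint sumR (n : nat) (g : nat -> R) : R :=
  match n with O => 0 | S k => sumR k g + g k end.

Definition d_future {X : Type} (d : X -> X -> R) (T : X -> X) (N : nat)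
  (x x' : X) : R :=
  sumR N (fun k => d (Nat.iter k T x) (Nat.iter k T x')).

(* d_{[-N;0)}(x,x') = sum_{n=-N}^{-1} d(T^n x, T^n x') = sum_{k=1}^{N} d(T^{-k} x, T^{-k} x') *)
Definition d_past {X : Type} (d : X -> X -> R) (Tinv : X -> X) (N : nat)
  (x x' : X) : R :=
  sumR N (fun k => d (Nat.iter (S k) Tinv x) (Nat.iter (S k) Tinv x')).

Definition almost_lipschitz_on {X Y : Type} (dX : X -> X -> R) (dY : Y -> Y -> R)
  (f : X -> Y) (K : X -> Prop) (c L : R) : Prop :=
  forall x x', K x -> K x' -> dY (f x) (f x') <= L * dX x x' + c.

(* Main.v *)
From Stdlib Require Import Reals Lra Lia ZArith List Classical ClassicalEpsilon FunctionalExtensionality PropExtensionality.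
Require Import Defs.
Open Scope R_scope.

Lemma set_ext {X} (A B : X -> Prop) : (forall x, A x <-> B x) -> A = B.
Proof. intro H; apply functional_extensionality; intro x; apply propositional_extensionality; auto. Qed.

Lemma choice_nat {A : Type} (P : nat -> A -> Prop) :
  (forall n, exists a, P n a) -> exists f, forall n, P n (f n).
Proof.
  intro H. exists (fun n => proj1_sig (constructive_indefinite_description _ (H n))).
  intro n. exact (proj2_sig (constructive_indefinite_description _ (H n))).
Qed.

Lemma arch_nat (r : R) : exists n : nat, r < INR n.
Proof.
  destruct (archimed r) as [H1 H2].
  destruct (Z_le_gt_dec (up r) 0) as [Hz|Hz].
  - exists 0%nat. simpl. apply IZR_le in Hz. lra.
  - exists (Z.to_nat (up r)). rewrite INR_IZR_INZ, Z2Nat.id by lia. lra.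
Qed.

Lemma floor_nat (r : R) : 0 <= r -> exists m : nat, INR m <= r < INR m + 1.
Proof.
  intro Hr. destruct (arch_nat r) as [n Hn]. revert Hn. induction n as [|n IH]; intro Hn.
  - simpl in Hn. lra.
  - destruct (Rlt_le_dec r (INR n)) as [h|h]. apply IH; auto.
    exists n. rewrite S_INR in Hn. lra.
Qed.

Section Borel.
Context {X : Type} (d : X -> X -> R).

Lemma borel_True : borel d (fun _ => True).
Proof. intros F HF _. apply HF. Qed.

Lemma borel_compl A : borel d A -> borel d (fun x => ~ A x).
Proof. intros HA F HF Ho. apply HF. apply HA; auto. Qed.

Lemma borel_cunion (A : nat -> X -> Prop) : (forall n, borel d (A n)) ->
  borel d (fun x => exists n, A n x).
Proof. intros HA F HF Ho. apply HF. intro n. apply HA; auto. Qed.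

Lemma borel_open U : is_open d U -> borel d U.
Proof. intros HU F HF Ho. auto. Qed.

Lemma borel_ext A B : (forall x, A x <-> B x) -> borel d A -> borel d B.
Proof. intros H HA. rewrite <- (set_ext A B H). exact HA. Qed.

Lemma borel_compl' A : borel d (fun x => ~ A x) -> borel d A.
Proof. intro H. apply (borel_ext (fun x => ~ ~ A x)). intro x; tauto. now apply borel_compl. Qed.

Lemma borel_union A B : borel d A -> borel d B -> borel d (fun x => A x \/ B x).
Proof.
  intros HA HB. apply (borel_ext (fun x => exists n, (match n with O => A | _ => B end) x)).
  - intro x; split. intros [[|n] H]; auto. intros [H|H]. exists O; auto. exists 1%nat; auto.
  - apply borel_cunion. intros [|n]; auto.
Qed.

Lemma borel_inter A B : borel d A -> borel d B -> borel d (fun x => A x /\ B x).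
Proof.
  intros HA HB. apply (borel_ext (fun x => ~ (~ A x \/ ~ B x))). intro x; tauto.
  apply borel_compl, borel_union; now apply borel_compl.
Qed.

Lemma borel_False : borel d (fun _ => False).
Proof. apply (borel_ext (fun x => ~ True)). intro; tauto. apply borel_compl, borel_True. Qed.

Lemma borel_cinter (A : nat -> X -> Prop) : (forall n, borel d (A n)) ->
  borel d (fun x => forall n, A n x).
Proof.
  intro H. apply (borel_ext (fun x => ~ exists n, ~ A n x)).
  - intro x; split. intros H1 n. apply NNPP; intro; apply H1; eauto. intros H1 [n Hn]; auto.
  - apply borel_compl, borel_cunion. intro; now apply borel_compl.
Qed.

Lemma borel_bunion (B : nat -> X -> Prop) n : (forall k, borel d (B k)) ->
  borel d (fun x => exists k, (k <= n)%nat /\ B k x).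
Proof.
  intro HB. induction n.
  - apply (borel_ext (B 0%nat)). intro x; split. intro; exists 0%nat; auto.
    intros [k [Hk H]]. replace k with 0%nat in H by lia. auto. auto.
  - apply (borel_ext (fun x => (exists k, (k <= n)%nat /\ B k x) \/ B (S n) x)).
    + intro x; split. intros [[k [Hk H]]|H]. exists k; split; auto; lia. exists (S n); auto.
      intros [k [Hk H]]. destruct (Nat.eq_dec k (S n)). subst; auto. left; exists k; split; auto; lia.
    + now apply borel_union.
Qed.

Lemma borel_prop (P : Prop) A : (P -> borel d A) -> borel d (fun x => P /\ A x).
Proof.
  intro H. destruct (classic P) as [p|p].
  - apply (borel_ext A). intro; tauto. auto.
  - apply (borel_ext (fun _ => False)). intro; tauto. apply borel_False.
Qed.

End Borel.

Section Meas.
Context {X : Type} (d : X -> X -> R) (mu : (X -> Prop) -> R) (Hmu : borel_prob d mu).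

Lemma mu_ext A B : (forall x, A x <-> B x) -> mu A = mu B.
Proof. intro H. now rewrite (set_ext A B H). Qed.

Lemma mu_ge0 A : borel d A -> 0 <= mu A.
Proof. destruct Hmu as [H _]. auto. Qed.

Lemma mu_True : mu (fun _ => True) = 1.
Proof. destruct Hmu as [_ [H _]]. auto. Qed.

Lemma mu_empty : mu (fun _ => False) = 0.
Proof.
  destruct Hmu as [_ [_ H]].
  specialize (H (fun _ _ => False) (fun _ => borel_False d) (fun n m x _ h _ => h)). cbv beta in H.
  rewrite (mu_ext (fun x => exists _ : nat, False) (fun _ => False)) in H by (intro; split; [intros [_ h]; auto | tauto]).
  set (c := mu (fun _ => False)) in *.
  destruct (Req_dec c 0) as [h|h]; auto. exfalso.
  destruct (H (Rabs c / 2)) as [N HN]. apply Rabs_pos_lt in h; lra.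
  specialize (HN (S N) ltac:(lia)). rewrite sum_cte in HN. unfold Rdist in HN.
  replace (c * INR (S (S N)) - c) with (c * INR (S N)) in HN by (rewrite (S_INR (S N)); ring).
  rewrite Rabs_mult, (Rabs_right (INR (S N))) in HN by (apply Rle_ge, pos_INR).
  assert (1 <= INR (S N)) by (rewrite S_INR; pose proof (pos_INR N); lra).
  apply Rabs_pos_lt in h. nra.
Qed.

Lemma mu_add A B : borel d A -> borel d B -> (forall x, A x -> B x -> False) ->
  mu (fun x => A x \/ B x) = mu A + mu B.
Proof.
  intros HA HB Hd. destruct Hmu as [_ [_ H]].
  set (C := fun n : nat => match n with O => A | 1%nat => B | _ => fun _ => False end).
  assert (HC : forall n, borel d (C n)) by (intros [|[|n]]; simpl; auto; apply borel_False).
  assert (Hdis : forall n m x, n <> m -> C n x -> C m x -> False).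
  { intros [|[|n]] [|[|m]] x Hnm; simpl; try tauto; try lia; eauto. }
  specialize (H C HC Hdis).
  rewrite (mu_ext (fun x => exists n, C n x) (fun x => A x \/ B x)) in H.
  2:{ intro x; split. intros [[|[|n]] h]; simpl in h; tauto. intros [h|h]. exists O; auto. exists 1%nat; auto. }
  apply (uniqueness_sum (fun n => mu (C n))); auto.
  intros e He. exists 1%nat. intros n Hn.
  assert (sum_f_R0 (fun n => mu (C n)) n = mu A + mu B).
  { induction n. lia. destruct n. simpl. ring. simpl sum_f_R0 in *. rewrite IHn by lia. simpl. rewrite mu_empty. ring. }
  rewrite H0. unfold Rdist. rewrite Rminus_diag, Rabs_R0. lra.
Qed.

Lemma mu_split A C : borel d A -> borel d C -> mu A = mu (fun x => A x /\ C x) + mu (fun x => A x /\ ~ C x).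
Proof.
  intros HA HC. rewrite <- mu_add. apply mu_ext; intro x. destruct (classic (C x)); tauto.
  now apply borel_inter. apply borel_inter; auto; now apply borel_compl. intros; tauto.
Qed.

Lemma mu_mono A B : borel d A -> borel d B -> (forall x, A x -> B x) -> mu A <= mu B.
Proof.
  intros HA HB H. rewrite (mu_split B A HB HA).
  rewrite (mu_ext (fun x => B x /\ A x) A) by (intro x; split; [tauto| intro; split; auto]).
  pose proof (mu_ge0 (fun x => B x /\ ~ A x) (borel_inter _ _ _ HB (borel_compl _ _ HA))). lra.
Qed.

Lemma mu_compl A : borel d A -> mu (fun x => ~ A x) = 1 - mu A.
Proof.
  intro HA. rewrite <- mu_True. rewrite (mu_split (fun _ => True) A (borel_True d) HA).
  rewrite (mu_ext (fun x => True /\ A x) A) by (intro; tauto).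
  rewrite (mu_ext (fun x => True /\ ~ A x) (fun x => ~ A x)) by (intro; tauto). ring.
Qed.

Lemma mu_le1 A : borel d A -> mu A <= 1.
Proof. intro HA. rewrite <- mu_True. apply mu_mono; auto. apply borel_True. Qed.

Lemma mu_diff A B : borel d A -> borel d B -> (forall x, B x -> A x) ->
  mu (fun x => A x /\ ~ B x) = mu A - mu B.
Proof.
  intros HA HB H. rewrite (mu_split A B HA HB).
  rewrite (mu_ext (fun x => A x /\ B x) B) by (intro; split; [tauto| auto]). ring.
Qed.

Lemma mu_sub2 A B : borel d A -> borel d B -> mu (fun x => A x \/ B x) <= mu A + mu B.
Proof.
  intros HA HB. rewrite (mu_ext (fun x => A x \/ B x) (fun x => A x \/ (B x /\ ~ A x))) by (intro x; destruct (classic (A x)); tauto).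
  rewrite mu_add; auto. 2: apply borel_inter; auto; now apply borel_compl. 2: intros; tauto.
  pose proof (mu_mono (fun x => B x /\ ~ A x) B ltac:(apply borel_inter; auto; now apply borel_compl) HB ltac:(intros x [h _]; exact h)). lra.
Qed.

Lemma mu_cont_below (C : nat -> X -> Prop) : (forall n, borel d (C n)) ->
  (forall n x, C n x -> C (S n) x) ->
  forall g, 0 < g -> exists M, mu (fun x => exists n, C n x) - g < mu (C M).
Proof.
  intros HC Hinc g Hg.
  assert (Hmon : forall n m x, (n <= m)%nat -> C n x -> C m x).
  { intros n m x Hnm. induction Hnm; auto. }
  set (D := fun n : nat => match n with O => C O | S k => fun x => C (S k) x /\ ~ C k x end).
  assert (HD : forall n, borel d (D n)).
  { intros [|k]; simpl; auto. apply borel_inter; auto. now apply borel_compl. }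
  assert (Hdis : forall n m x, n <> m -> D n x -> D m x -> False).
  { assert (forall n m x, (n < m)%nat -> D n x -> D m x -> False).
    { intros n [|m] x Hnm; [lia|]. simpl. intros H1 [_ H2]. apply H2.
      apply (Hmon n). lia. destruct n; simpl in H1; tauto. }
    intros n m x Hnm H1 H2. destruct (Nat.lt_total n m) as [h|[h|h]]; [eauto|lia|eauto]. }
  destruct Hmu as [_ [_ Hs]]. specialize (Hs D HD Hdis).
  rewrite (mu_ext (fun x => exists n, D n x) (fun x => exists n, C n x)) in Hs.
  2:{ intro x; split. intros [[|n] h]; simpl in h. eauto. exists (S n); tauto.
      intros [n h]. induction n. exists O; auto. destruct (classic (C n x)). auto. exists (S n); simpl; auto. }
  assert (Hp : forall n, sum_f_R0 (fun n => mu (D n)) n = mu (C n)).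
  { induction n; simpl; auto. rewrite IHn.
    rewrite (mu_split (C (S n)) (C n)) by auto.
    rewrite (mu_ext (fun x => C (S n) x /\ C n x) (C n)) by (intro; split; [tauto|auto]). ring. }
  destruct (Hs g Hg) as [M HM]. exists M. specialize (HM M (le_n _)). rewrite Hp in HM.
  unfold Rdist in HM. apply Rabs_def2 in HM. lra.
Qed.

Lemma mu_csub (B : nat -> X -> Prop) g : (forall n, borel d (B n)) ->
  (forall n, mu (B n) <= g / 2 ^ (S n)) -> mu (fun x => exists n, B n x) <= g.
Proof.
  intros HB Hb.
  set (C := fun n x => exists k, (k <= n)%nat /\ B k x).
  assert (HC : forall n, borel d (C n)) by (intro; now apply borel_bunion).
  assert (Hc : forall n, mu (C n) <= g - g / 2 ^ (S n)).
  { induction n.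
    - rewrite (mu_ext (C 0%nat) (B 0%nat)). specialize (Hb 0%nat). simpl in *. lra.
      intro x; unfold C; split. intros [k [Hk h]]; replace k with 0%nat in h by lia; auto. intro; exists 0%nat; auto.
    - rewrite (mu_ext (C (S n)) (fun x => C n x \/ B (S n) x)).
      + pose proof (mu_sub2 _ _ (HC n) (HB (S n))). specialize (Hb (S n)).
        assert (g / 2 ^ S (S n) = (g / 2 ^ S n) / 2) by (simpl; field; apply pow_nonzero; lra). lra.
      + intro x; unfold C; split. intros [k [Hk h]]. destruct (Nat.eq_dec k (S n)). subst; auto. left; exists k; split; auto; lia.
        intros [[k [Hk h]]|h]. exists k; split; auto; lia. exists (S n); auto. }
  apply Rnot_lt_le; intro Hlt.
  destruct (mu_cont_below C HC) with (g := mu (fun x => exists n, B n x) - g) as [M HM]. 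
  - intros n x [k [Hk h]]. exists k; split; auto; lia.
  - lra.
  - rewrite (mu_ext (fun x => exists n, C n x) (fun x => exists n, B n x)) in HM.
    + specialize (Hc M). assert (0 < g / 2 ^ S M). { apply Rdiv_lt_0_compat. 2: apply pow_lt; lra.
      pose proof (mu_ge0 _ (HB 0%nat)). specialize (Hb 0%nat). simpl in Hb.
      destruct (Rle_lt_dec g 0); [|auto]. exfalso. pose proof (mu_ge0 _ (HC M)). 
      assert (0 < g / 2 ^ S M \/ g / 2 ^ S M <= 0) by lra. destruct H1; [lra|].
      assert (g / 2 ^ S M >= g) . { unfold Rdiv. assert (0 < / 2 ^ S M <= 1). split. apply Rinv_0_lt_compat, pow_lt; lra.
        rewrite <- Rinv_1. apply Rinv_le_contravar. lra. apply pow_R1_Rle. lra. nra. } lra. }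
      lra.
    + intro x; unfold C; split. intros [n [k [_ h]]]; eauto. intros [n h]. exists n, n; auto.
Qed.

End Meas.

Definition is_closed {X} (d : X -> X -> R) (C : X -> Prop) := is_open d (fun x => ~ C x).

Section Closed.
Context {X : Type} (d : X -> X -> R) (Hd : is_metric d).

Lemma d_sym x y : d x y = d y x.
Proof. destruct Hd as [_ [_ [H _]]]. auto. Qed.
Lemma d_tri x y z : d x z <= d x y + d y z.
Proof. destruct Hd as [_ [_ [_ H]]]. auto. Qed.
Lemma d_ge0 x y : 0 <= d x y.
Proof. destruct Hd as [H _]. auto. Qed.
Lemma d_refl x : d x x = 0.
Proof. destruct Hd as [_ [H _]]. apply H; auto. Qed.

Lemma closed_borel C : is_closed d C -> borel d C.
Proof. intro H. apply borel_compl'. now apply borel_open. Qed.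

Lemma open_ball x r : is_open d (fun y => d x y < r).
Proof.
  intros y Hy. exists (r - d x y). split. lra. intros z Hz.
  pose proof (d_tri x y z). lra.
Qed.

Lemma closed_all (I : Type) (F : I -> X -> Prop) : (forall i, is_closed d (F i)) ->
  is_closed d (fun x => forall i, F i x).
Proof.
  intros H x Hx. apply not_all_ex_not in Hx. destruct Hx as [i Hi].
  destruct (H i x Hi) as [r [Hr Hb]]. exists r; split; auto. intros y Hy Hall. apply (Hb y Hy), Hall.
Qed.

Lemma closed_union C D : is_closed d C -> is_closed d D -> is_closed d (fun x => C x \/ D x).
Proof.
  intros HC HD x Hx. destruct (HC x ltac:(tauto)) as [r1 [H1 B1]]. destruct (HD x ltac:(tauto)) as [r2 [H2 B2]].
  exists (Rmin r1 r2). split. now apply Rmin_glb_lt. intros y Hy [h|h].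
  apply (B1 y); auto. pose proof (Rmin_l r1 r2); lra. apply (B2 y); auto. pose proof (Rmin_r r1 r2); lra.
Qed.

Lemma closed_empty : is_closed d (fun _ => False).
Proof. intros x _. exists 1. split. lra. auto. Qed.

Lemma closed_bunion (F : nat -> X -> Prop) n : (forall k, is_closed d (F k)) ->
  is_closed d (fun x => exists k, (k <= n)%nat /\ F k x).
Proof.
  intro HF. induction n.
  - rewrite (set_ext _ (F 0%nat)). auto. intro x; split. intros [k [Hk H]]; replace k with 0%nat in H by lia; auto. intro; exists 0%nat; auto.
  - rewrite (set_ext _ (fun x => (exists k, (k <= n)%nat /\ F k x) \/ F (S n) x)). now apply closed_union.
    intro x; split. intros [k [Hk H]]. destruct (Nat.eq_dec k (S n)). subst; auto. left; exists k; split; auto; lia.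
    intros [[k [Hk h]]|h]. exists k; split; auto; lia. exists (S n); auto.
Qed.

Lemma closed_compact C : compact_space d -> is_closed d C -> is_compact d C.
Proof.
  intros Hc HC I U HU Hcov.
  destruct (Hc (option I) (fun o x => match o with None => ~ C x | Some i => U i x end)) as [l Hl].
  - intros [i|]; auto.
  - intros x _. destruct (classic (C x)) as [h|h]. destruct (Hcov x h) as [i Hi]. exists (Some i); auto. exists None; auto.
  - exists (flat_map (fun o => match o with Some i => i :: nil | None => nil end) l).
    intros x Hx. destruct (Hl x Logic.I) as [[i|] [Hin Hi]]; [|tauto].
    exists i; split; auto. apply in_flat_map. exists (Some i); split; simpl; auto.
Qed.

Lemma open_compl_closed U : is_open d U -> is_closed d (fun x => ~ U x).
Proof. intro H. unfold is_closed. rewrite (set_ext _ U). auto. intro; tauto. Qed.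

Context (mu : (X -> Prop) -> R) (Hmu : borel_prob d mu).

Definition Rg A := borel d A /\
  (forall g, 0 < g -> exists F, is_closed d F /\ (forall x, F x -> A x) /\ mu (fun x => A x /\ ~ F x) < g) /\
  (forall g, 0 < g -> exists F, is_closed d F /\ (forall x, F x -> ~ A x) /\ mu (fun x => ~ A x /\ ~ F x) < g).

Lemma Rg_open U : is_open d U -> Rg U.
Proof.
  intro HU. split; [now apply borel_open|split].
  - intros g Hg.
    set (C := fun (k : nat) x => forall y, d x y < / INR (S k) -> U y).
    assert (HCc : forall k, is_closed d (C k)).
    { intros k x Hx. unfold C in Hx. apply not_all_ex_not in Hx. destruct Hx as [y Hy].
      apply imply_to_and in Hy. destruct Hy as [Hy1 Hy2].
      exists (/ INR (S k) - d x y). split. lra. intros z Hz HCz. apply Hy2, HCz.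
      pose proof (d_tri z x y). rewrite (d_sym z x) in H. lra. }
    assert (HCU : forall k x, C k x -> U x). { intros k x H. apply H. rewrite d_refl. apply Rinv_0_lt_compat, lt_0_INR; lia. }
    assert (Hinc : forall k x, C k x -> C (S k) x).
    { intros k x H y Hy. apply H. eapply Rlt_le_trans; [exact Hy|]. apply Rinv_le_contravar. apply lt_0_INR; lia.
      apply le_INR; lia. }
    destruct (mu_cont_below d mu Hmu C (fun k => closed_borel _ (HCc k)) Hinc g Hg) as [M HM].
    exists (C M). split; auto. split; [exact (HCU M)|].
    rewrite (mu_diff d mu Hmu). 2: apply borel_open; auto. 2: apply closed_borel; auto. 2: exact (HCU M).
    rewrite (mu_ext mu (fun x => exists n, C n x) U) in HM. lra.
    intro x; split. intros [n h]; eauto. intro h. destruct (HU x h) as [r [Hr Hb]].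
    destruct (arch_nat (/ r)) as [n Hn]. exists n. intros y Hy. apply Hb.
    eapply Rlt_trans; [exact Hy|]. rewrite <- (Rinv_inv r). apply Rinv_lt_contravar.
    apply Rmult_lt_0_compat. apply Rinv_0_lt_compat; auto. apply lt_0_INR; lia. rewrite S_INR; lra.
  - intros g Hg. exists (fun x => ~ U x). split. now apply open_compl_closed. split. auto.
    rewrite (mu_ext mu _ (fun _ => False)) by (intro; tauto). rewrite (mu_empty d mu Hmu). auto.
Qed.

Lemma Rg_sigma : sigma_algebra Rg.
Proof.
  split; [|split].
  - apply Rg_open. intros x _. exists 1; split; auto; lra.
  - intros A [HA [H1 H2]]. split; [now apply borel_compl|split].
    + intros g Hg. destruct (H2 g Hg) as [F [HF [HFA Hm]]]. exists F; auto.
    + intros g Hg. destruct (H1 g Hg) as [F [HF [HFA Hm]]]. exists F. split; auto. split. intros x h h'; auto.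
      rewrite (mu_ext mu _ (fun x => A x /\ ~ F x)); auto. intro x; split; intros [a b]; split; auto. apply NNPP; auto.
  - intros A HA. assert (HAb : forall n, borel d (A n)) by (intro n; apply (HA n)).
    split; [now apply borel_cunion|split].
    + intros g Hg.
      destruct (choice_nat (fun n F => is_closed d F /\ (forall x, F x -> A n x) /\ mu (fun x => A n x /\ ~ F x) < (g/4) / 2 ^ S n)) as [F HF].
      { intro n. destruct (HA n) as [_ [H _]]. apply H. apply Rdiv_lt_0_compat. lra. apply pow_lt; lra. }
      set (C := fun n x => exists k, (k <= n)%nat /\ F k x).
      assert (HCc : forall n, is_closed d (C n)) by (intro; apply closed_bunion; intro; apply HF).
      assert (HFb : forall n, borel d (F n)) by (intro; apply closed_borel, HF).
      destruct (mu_cont_below d mu Hmu C (fun k => closed_borel _ (HCc k))) with (g := g/2) as [M HM].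
      { intros n x [k [Hk h]]. exists k; split; auto; lia. } lra.
      rewrite (mu_ext mu (fun x => exists n, C n x) (fun x => exists n, F n x)) in HM.
      2:{ intro x; split. intros [n [k [_ h]]]; eauto. intros [n h]. exists n, n; auto. }
      exists (C M). split; auto. split. intros x [k [_ h]]. exists k. apply HF; auto.
      assert (Hsub : mu (fun x => exists n, A n x /\ ~ F n x) <= g / 4).
      { apply mu_csub with (d := d); auto. intro n. apply borel_inter; auto. apply borel_compl; auto.
        intro n. apply Rlt_le, HF. }
      assert (HU : borel d (fun x => exists n, A n x)) by (now apply borel_cunion).
      assert (HUF : borel d (fun x => exists n, F n x)) by (now apply borel_cunion).
      rewrite (mu_diff d mu Hmu); auto. 2: apply closed_borel; auto. 2:{ intros x [k [_ h]]. exists k. apply HF; auto. }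
      rewrite (mu_split d mu Hmu _ _ HU HUF).
      assert (mu (fun x => (exists n, A n x) /\ ~ (exists n, F n x)) <= mu (fun x => exists n, A n x /\ ~ F n x)).
      { apply mu_mono with (d := d); auto. apply borel_inter; auto; now apply borel_compl.
        apply borel_cunion; intro; apply borel_inter; auto; now apply borel_compl.
        intros x [[n h1] h2]. exists n; split; auto. intro; apply h2; eauto. }
      assert (mu (fun x => (exists n, A n x) /\ (exists n, F n x)) <= mu (fun x => exists n, F n x)).
      { apply mu_mono with (d := d); auto. apply borel_inter; auto. tauto. }
      lra.
    + intros g Hg.
      destruct (choice_nat (fun n F => is_closed d F /\ (forall x, F x -> ~ A n x) /\ mu (fun x => ~ A n x /\ ~ F x) < (g/2) / 2 ^ S n)) as [F HF].
      { intro n. destruct (HA n) as [_ [_ H]]. apply H. apply Rdiv_lt_0_compat. lra. apply pow_lt; lra. }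
      exists (fun x => forall n, F n x). split. apply closed_all; intro; apply HF.
      split. intros x h [n hn]. exact (proj1 (proj2 (HF n)) x (h n) hn).
      assert (HFb : forall n, borel d (F n)) by (intro; apply closed_borel, HF).
      assert (mu (fun x => exists n, ~ A n x /\ ~ F n x) <= g / 2).
      { apply mu_csub with (d := d); auto. intro n. apply borel_inter; apply borel_compl; auto.
        intro n. apply Rlt_le, HF. }
      assert (mu (fun x => ~ (exists n, A n x) /\ ~ (forall n, F n x)) <= mu (fun x => exists n, ~ A n x /\ ~ F n x)).
      { apply mu_mono with (d := d); auto. apply borel_inter; apply borel_compl. now apply borel_cunion. now apply borel_cinter.
        apply borel_cunion; intro; apply borel_inter; apply borel_compl; auto.
        intros x [h1 h2]. apply not_all_ex_not in h2. destruct h2 as [n h2]. exists n; split; auto. intro; apply h1; eauto. }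
      lra.
Qed.

Lemma inner_reg A : borel d A -> forall g, 0 < g ->
  exists F, is_closed d F /\ (forall x, F x -> A x) /\ mu (fun x => A x /\ ~ F x) < g.
Proof.
  intro HA. assert (Rg A) by (apply HA; [apply Rg_sigma | apply Rg_open]). apply H.
Qed.

End Closed.

Definition lsum {A} (f : A -> R) (l : list A) := fold_right (fun a acc => f a + acc) 0 l.

Lemma lsum_ge0 {A} (f : A -> R) l : (forall a, 0 <= f a) -> 0 <= lsum f l.
Proof. intro H. induction l; simpl. lra. specialize (H a). lra. Qed.

Lemma lsum_in {A} (f : A -> R) l a : (forall a, 0 <= f a) -> In a l -> f a <= lsum f l.
Proof.
  intros H Hin. induction l; simpl in *. tauto. destruct Hin as [<-|Hin].
  pose proof (lsum_ge0 f l H). lra. specialize (IHl Hin). specialize (H a0). lra.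
Qed.

Definition minpos {A} (l : list (A * R)) : R :=
  fold_right (fun p acc => Rmin (if Rlt_dec 0 (snd p) then snd p else 1) acc) 1 l.

Lemma minpos_pos {A} (l : list (A * R)) : 0 < minpos l.
Proof.
  induction l; simpl. lra. apply Rmin_glb_lt; auto. destruct (Rlt_dec 0 (snd a)); lra.
Qed.

Lemma minpos_le {A} (l : list (A * R)) p : In p l -> 0 < snd p -> minpos l <= snd p.
Proof.
  induction l; simpl. tauto. intros [Heq|Hin] Hp.
  - subst a. destruct (Rlt_dec 0 (snd p)); [|lra]. apply Rmin_l.
  - eapply Rle_trans; [apply Rmin_r|]. auto.
Qed.

Section Compact.
Context {X : Type} (d : X -> X -> R) (Hd : is_metric d) (Hc : compact_space d).

Lemma finite_cover r : 0 < r -> exists l : list X, forall y, exists z, In z l /\ d z y < r.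
Proof.
  intro Hr. destruct (Hc X (fun z y => d z y < r)) as [l Hl].
  - intro z; apply open_ball; auto.
  - intros x _. exists x. rewrite d_refl; auto.
  - exists l. intro y. destruct (Hl y Logic.I) as [z [H1 H2]]. eauto.
Qed.

Lemma bounded : exists D, 0 < D /\ forall y y', d y y' <= D.
Proof.
  destruct (finite_cover 1) as [l Hl]. lra.
  exists (2 + lsum (fun z => lsum (fun z' => d z z') l) l). split.
  - pose proof (lsum_ge0 (fun z => lsum (fun z' => d z z') l) l). 
    assert (0 <= lsum (fun z => lsum (fun z' => d z z') l) l). apply H. intro; apply lsum_ge0; intro; apply d_ge0; auto. lra.
  - intros y y'. destruct (Hl y) as [z [Hz1 Hz2]]. destruct (Hl y') as [z' [Hz1' Hz2']].
    pose proof (d_tri d Hd y z y'). pose proof (d_tri d Hd z z' y'). rewrite (d_sym d Hd y z) in H.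
    assert (d z z' <= lsum (fun z' => d z z') l) by (apply (lsum_in (fun z' => d z z')); auto; intro; apply d_ge0; auto).
    assert (lsum (fun z' => d z z') l <= lsum (fun z => lsum (fun z' => d z z') l) l).
    { apply (lsum_in (fun z => lsum (fun z' => d z z') l)); auto. intro; apply lsum_ge0; intro; apply d_ge0; auto. }
    lra.
Qed.

Lemma separation C1 C2 : is_closed d C1 -> is_closed d C2 -> (forall x, C1 x -> C2 x -> False) ->
  exists eta, 0 < eta /\ forall x x', C1 x -> C2 x' -> eta <= d x x'.
Proof.
  intros H1 H2 Hdis.
  set (U := fun (p : X * R) x => 0 < snd p /\ ((forall y, d (fst p) y < 2 * snd p -> ~ C1 y) \/
                                               (forall y, d (fst p) y < 2 * snd p -> ~ C2 y)) /\ d (fst p) x < snd p).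
  destruct (Hc (X * R)%type U) as [l Hl].
  - intros p x [Hp [Hor Hx]]. exists (snd p - d (fst p) x). split. lra.
    intros y Hy. split; auto. split; auto. pose proof (d_tri d Hd (fst p) x y). lra.
  - intros x _. destruct (classic (C1 x)) as [h|h].
    + destruct (H2 x (fun h' => Hdis x h h')) as [s [Hs Hb]]. exists (x, s/2). split; simpl. lra. split.
      right. intros y Hy. apply Hb. lra. rewrite d_refl; auto; lra.
    + destruct (H1 x h) as [s [Hs Hb]]. exists (x, s/2). split; simpl. lra. split.
      left. intros y Hy. apply Hb. lra. rewrite d_refl; auto; lra.
  - exists (minpos l). split. apply minpos_pos. intros x x' hx hx'. apply Rnot_lt_le. intro Hlt.
    destruct (Hl x Logic.I) as [p [Hin [Hp [Hor Hx]]]].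
    pose proof (minpos_le l p Hin Hp). pose proof (d_tri d Hd (fst p) x x').
    destruct Hor as [h|h]. apply (h x); auto; lra. apply (h x'); auto; lra.
Qed.

End Compact.

Section Lusin.
Context {X Y : Type} (dX : X -> X -> R) (HdX : is_metric dX) (HcX : compact_space dX)
  (mu : (X -> Prop) -> R) (Hmu : borel_prob dX mu)
  (dY : Y -> Y -> R) (HdY : is_metric dY) (HcY : compact_space dY)
  (Phi : X -> Y) (HPhi : borel_measurable dX dY Phi).

Lemma lusin_step r : 0 < r -> forall (l : list Y) W, borel dX W ->
  (forall x, W x -> exists y, In y l /\ dY y (Phi x) < r) -> forall g, 0 < g ->
  exists C, is_closed dX C /\ (forall x, C x -> W x) /\ mu (fun x => W x /\ ~ C x) < g /\
  exists eta, 0 < eta /\ forall x x', C x -> C x' -> dX x x' < eta -> dY (Phi x) (Phi x') < 2 * r.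
Proof.
  intros Hr l. induction l as [|y l IH]; intros W HW Hcov g Hg.
  - exists (fun _ => False). split. apply closed_empty. split. tauto. split.
    rewrite (mu_ext mu _ (fun _ => False)). rewrite (mu_empty dX mu Hmu); auto.
    intro x; split; [|tauto]. intros [h _]. destruct (Hcov x h) as [y [[] _]].
    exists 1. split. lra. tauto.
  - set (P := fun x => dY y (Phi x) < r).
    assert (HP : borel dX P) by (apply (HPhi (fun z => dY y z < r)), borel_open, open_ball; auto).
    destruct (inner_reg dX HdX mu Hmu (fun x => W x /\ P x)) with (g := g/2) as [C1 [HC1 [HC1W Hm1]]].
    now apply borel_inter. lra.
    destruct (IH (fun x => W x /\ ~ P x)) with (g := g/2) as [C2 [HC2 [HC2W [Hm2 [eta2 [He2 Hu2]]]]]].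
    apply borel_inter; auto; now apply borel_compl.
    { intros x [h1 h2]. destruct (Hcov x h1) as [z [[Heq|Hz] Hd]]. subst z. exfalso; apply h2; exact Hd. eauto. } lra.
    destruct (separation dX HdX HcX C1 C2 HC1 HC2) as [eta1 [He1 Hs]].
    { intros x h1 h2. apply (proj2 (HC2W x h2)), HC1W; auto. }
    exists (fun x => C1 x \/ C2 x). split. now apply closed_union. split.
    { intros x [h|h]. apply HC1W; auto. apply HC2W; auto. } split.
    + assert (Hb1 : borel dX C1) by (apply closed_borel; auto).
      assert (Hb2 : borel dX C2) by (apply closed_borel; auto).
      eapply Rle_lt_trans. apply (mu_mono dX mu Hmu _ (fun x => (W x /\ P x /\ ~ C1 x) \/ (W x /\ ~ P x /\ ~ C2 x))).
      apply borel_inter; auto. apply borel_compl, borel_union; auto.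
      apply borel_union; repeat apply borel_inter; auto; apply borel_compl; auto.
      { intros x [h1 h2]. destruct (classic (P x)); [left|right]; tauto. }
      eapply Rle_lt_trans. apply (mu_sub2 dX mu Hmu).
      repeat apply borel_inter; auto; apply borel_compl; auto.
      repeat apply borel_inter; auto; apply borel_compl; auto.
      rewrite (mu_ext mu (fun x => W x /\ P x /\ ~ C1 x) (fun x => (W x /\ P x) /\ ~ C1 x)) by (intro; tauto).
      rewrite (mu_ext mu (fun x => W x /\ ~ P x /\ ~ C2 x) (fun x => (W x /\ ~ P x) /\ ~ C2 x)) by (intro; tauto).
      lra.
    + exists (Rmin eta1 eta2). split. now apply Rmin_glb_lt.
      intros x x' hx hx' Hxx. pose proof (Rmin_l eta1 eta2). pose proof (Rmin_r eta1 eta2).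
      destruct hx as [hx|hx]; destruct hx' as [hx'|hx'].
      * pose proof (proj2 (HC1W x hx)). pose proof (proj2 (HC1W x' hx')). unfold P in *.
        pose proof (d_tri dY HdY (Phi x) y (Phi x')). rewrite (d_sym dY HdY (Phi x) y) in H3. lra.
      * pose proof (Hs x x' hx hx'). lra.
      * pose proof (Hs x' x hx' hx). rewrite (d_sym dX HdX) in H1. lra.
      * pose proof (Hu2 x x' hx hx'). lra.
Qed.

Lemma lusin delta : 0 < delta -> exists K, is_closed dX K /\ mu (fun x => ~ K x) <= delta /\
  forall rho, 0 < rho -> exists eta, 0 < eta /\ forall x x', K x -> K x' -> dX x x' < eta -> dY (Phi x) (Phi x') < rho.
Proof.
  intro Hdel.
  destruct (choice_nat (fun n C => is_closed dX C /\ mu (fun x => ~ C x) <= delta / 2 ^ S n /\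
     exists eta, 0 < eta /\ forall x x', C x -> C x' -> dX x x' < eta -> dY (Phi x) (Phi x') < 2 * / INR (S n))) as [K HK].
  { intro n. assert (Hr : 0 < / INR (S n)) by (apply Rinv_0_lt_compat, lt_0_INR; lia).
    destruct (finite_cover dY HdY HcY _ Hr) as [l Hl].
    destruct (lusin_step _ Hr l (fun _ => True) (borel_True dX)) with (g := delta / 2 ^ S n) as [C [HC [_ [Hm Hu]]]].
    intros x _. apply Hl. apply Rdiv_lt_0_compat; auto; apply pow_lt; lra.
    exists C. split; auto. split; auto. rewrite (mu_ext mu _ (fun x => True /\ ~ C x)) by (intro; tauto). lra. }
  exists (fun x => forall n, K n x). split. apply closed_all; intro; apply HK. split.
  - rewrite (mu_ext mu _ (fun x => exists n, ~ K n x)).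
    apply mu_csub with (d := dX); auto. intro; apply borel_compl, closed_borel; auto; apply HK. intro; apply HK.
    intro x; split. intro h. apply not_all_ex_not in h; auto. intros [n h] h'; auto.
  - intros rho Hrho. destruct (arch_nat (2 / rho)) as [n Hn].
    destruct (HK n) as [_ [_ [eta [He Hu]]]]. exists eta; split; auto.
    intros x x' hx hx' Hxx. eapply Rlt_le_trans. apply Hu; auto.
    assert (0 < INR (S n)) by (apply lt_0_INR; lia). rewrite S_INR in *.
    apply (Rmult_lt_compat_r rho) in Hn; auto. unfold Rdiv in Hn. rewrite Rmult_assoc, Rinv_l in Hn by lra.
    apply Rmult_le_reg_r with (INR n + 1). lra. rewrite Rmult_assoc, Rinv_l by lra. nra.
Qed.

End Lusin.

Fixpoint atl {X} (B : nat -> X -> Prop) (N j : nat) (x : X) {struct N} : Prop :=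
  match j with
  | O => True
  | S j' => match N with
            | O => False
            | S N' => (B O x /\ atl (fun k => B (S k)) N' j' x) \/ atl (fun k => B (S k)) N' j x
            end
  end.

Lemma atl_mono {X} N : forall (B : nat -> X -> Prop) j x, atl B N (S j) x -> atl B N j x.
Proof.
  induction N; intros B j x H. simpl in H. tauto.
  destruct j. simpl; auto. simpl in H |- *. destruct H as [[h1 h2]|h]. left; split; auto. right; auto.
Qed.

Lemma sumR_shift N (g : nat -> R) : sumR (S N) g = g O + sumR N (fun k => g (S k)).
Proof. induction N; simpl in *. ring. rewrite IHN. ring. Qed.

Lemma sumR_le N (f g : nat -> R) : (forall k, f k <= g k) -> sumR N f <= sumR N g.
Proof. intro H. induction N; simpl. lra. specialize (H N). lra. Qed.

Lemma sumR_ext N (f g : nat -> R) : (forall k, f k = g k) -> sumR N f = sumR N g.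
Proof. intro H. induction N; simpl. lra. rewrite IHN, H. auto. Qed.

Lemma sumR_plus N (f g : nat -> R) : sumR N (fun k => f k + g k) = sumR N f + sumR N g.
Proof. induction N; simpl. lra. rewrite IHN. ring. Qed.

Lemma sumR_scal N c (f : nat -> R) : sumR N (fun k => c * f k) = c * sumR N f.
Proof. induction N; simpl. lra. rewrite IHN. ring. Qed.

Lemma sumR_const N c : sumR N (fun _ => c) = INR N * c.
Proof. induction N. simpl; ring. simpl sumR. rewrite IHN, S_INR. ring. Qed.

Lemma sumR_ge0 N (f : nat -> R) : (forall k, 0 <= f k) -> 0 <= sumR N f.
Proof. intro H. induction N; simpl. lra. specialize (H N). lra. Qed.

Lemma count_bound {X} N : forall (B : nat -> X -> Prop) (x : X) m (e : nat -> R) D,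
  0 <= D -> (forall k, 0 <= e k <= D) -> (forall k, ~ B k x -> e k = 0) ->
  ~ atl B N (S m) x -> sumR N e <= D * INR m.
Proof.
  induction N; intros B x m e D HD He Hz Hn.
  - simpl. pose proof (pos_INR m). nra.
  - rewrite sumR_shift. destruct (classic (B O x)) as [h|h].
    + destruct m. { exfalso. apply Hn. simpl. left. split; auto. destruct N; simpl; auto. }
      assert (sumR N (fun k => e (S k)) <= D * INR m).
      { apply (IHN (fun k => B (S k)) x m); auto. intro H; apply Hn; simpl; left; auto. }
      specialize (He O). rewrite S_INR. nra.
    + rewrite (Hz O h). assert (sumR N (fun k => e (S k)) <= D * INR m).
      { apply (IHN (fun k => B (S k)) x m); auto. intro H; apply Hn; simpl; right; auto. }
      lra.
Qed.

Section Markov.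
Context {X : Type} (d : X -> X -> R) (mu : (X -> Prop) -> R) (Hmu : borel_prob d mu).

Lemma atl_borel N : forall (B : nat -> X -> Prop) j, (forall k, borel d (B k)) -> borel d (atl B N j).
Proof.
  induction N; intros B j HB.
  - destruct j; simpl. apply borel_True. apply borel_False.
  - destruct j; simpl. apply borel_True. apply borel_union. apply borel_inter; auto.
    apply IHN; auto.
Qed.

Lemma markov N : forall (B : nat -> X -> Prop) W j, (forall k, borel d (B k)) -> borel d W ->
  INR j * mu (fun x => atl B N j x /\ W x) <= sumR N (fun k => mu (fun x => B k x /\ W x)).
Proof.
  induction N; intros B W j HB HW.
  - destruct j. simpl. rewrite Rmult_0_l. lra.
    simpl. rewrite (mu_ext mu _ (fun _ => False)) by (intro; tauto). rewrite (mu_empty d mu Hmu). lra.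
  - destruct j.
    { simpl INR. rewrite Rmult_0_l. apply sumR_ge0. intro k. apply (mu_ge0 d mu Hmu), borel_inter; auto. }
    set (B' := fun k => B (S k)).
    assert (HB' : forall k, borel d (B' k)) by (intro; apply HB).
    assert (HA : borel d (fun x => atl B (S N) (S j) x /\ W x)) by (apply borel_inter; auto; apply atl_borel; auto).
    rewrite (mu_split d mu Hmu _ (B O)) by auto.
    assert (H1 : mu (fun x => (atl B (S N) (S j) x /\ W x) /\ B O x) <= mu (fun x => atl B' N j x /\ (W x /\ B O x))).
    { apply (mu_mono d mu Hmu). apply borel_inter; auto. apply borel_inter; [apply atl_borel; auto|apply borel_inter; auto].
      intros x [[h1 h2] h3]. simpl in h1. split; [|tauto]. destruct h1 as [[_ h]|h]; auto. apply atl_mono; auto. }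
    assert (H1' : mu (fun x => (atl B (S N) (S j) x /\ W x) /\ B O x) <= mu (fun x => W x /\ B O x)).
    { apply (mu_mono d mu Hmu). apply borel_inter; auto. apply borel_inter; auto. tauto. }
    assert (H2 : mu (fun x => (atl B (S N) (S j) x /\ W x) /\ ~ B O x) = mu (fun x => atl B' N (S j) x /\ (W x /\ ~ B O x))).
    { apply mu_ext. intro x. simpl. unfold B'. tauto. }
    pose proof (IHN B' (fun x => W x /\ B O x) j HB' ltac:(apply borel_inter; auto)) as I1.
    pose proof (IHN B' (fun x => W x /\ ~ B O x) (S j) HB' ltac:(apply borel_inter; auto; apply borel_compl; auto)) as I2.
    rewrite sumR_shift.
    assert (Hs : sumR N (fun k => mu (fun x => B (S k) x /\ W x)) =
                 sumR N (fun k => mu (fun x => B' k x /\ W x /\ B O x)) + sumR N (fun k => mu (fun x => B' k x /\ W x /\ ~ B O x))).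
    { rewrite <- sumR_plus. apply sumR_ext. intro k. rewrite (mu_split d mu Hmu (fun x => B (S k) x /\ W x) (B O)).
      f_equal; apply mu_ext; intro; unfold B'; tauto. apply borel_inter; auto. auto. }
    rewrite Hs. rewrite H2. rewrite S_INR.
    rewrite (mu_ext mu (fun x => B O x /\ W x) (fun x => W x /\ B O x)) by (intro; tauto).
    pose proof (pos_INR j).
    pose proof (mu_ge0 d mu Hmu (fun x => (atl B (S N) (S j) x /\ W x) /\ B O x) ltac:(apply borel_inter; auto)).
    rewrite S_INR in I2. nra.
Qed.

Lemma mu_null_cunion (B : nat -> X -> Prop) : (forall k, borel d (B k)) -> (forall k, mu (B k) = 0) ->
  mu (fun x => exists k, B k x) = 0.
Proof.
  intros HB H0. apply Rle_antisym.
  - apply Rnot_lt_le. intro Hlt. 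
    assert (mu (fun x => exists k, B k x) <= mu (fun x => exists k, B k x) / 2).
    { apply (mu_csub d mu Hmu); auto. intro n. rewrite H0. apply Rlt_le, Rdiv_lt_0_compat; [lra | apply pow_lt; lra]. }
    lra.
  - apply (mu_ge0 d mu Hmu). now apply borel_cunion.
Qed.

End Markov.

Section Inv.
Context {X : Type} (d : X -> X -> R).

Lemma borel_pre (f : X -> X) A : continuous_on d d f (fun _ => True) -> borel d A -> borel d (fun x => A (f x)).
Proof.
  intros Hf HA F HF Ho. apply (HA (fun B => F (fun x => B (f x)))).
  - destruct HF as [H1 [H2 H3]]. split; [exact H1|split]. intros B HB; apply H2; exact HB.
    intros B HB; apply H3; exact HB.
  - intros U HU. apply Ho. intros x Hx. destruct (HU (f x) Hx) as [r [Hr Hb]].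
    destruct (Hf x Logic.I r Hr) as [del [Hdel Hc]]. exists del. split; [exact Hdel|]. intros y Hy. apply Hb, Hc; auto.
Qed.

Lemma borel_iter (f : X -> X) k : continuous_on d d f (fun _ => True) ->
  forall A, borel d A -> borel d (fun x => A (Nat.iter k f x)).
Proof.
  intro Hf. induction k; intros A HA. simpl; auto.
  apply (IHk (fun y => A (f y))). now apply borel_pre.
Qed.

Lemma mu_iter (mu : (X -> Prop) -> R) (f : X -> X) k : continuous_on d d f (fun _ => True) ->
  (forall A, borel d A -> mu (fun x => A (f x)) = mu A) ->
  forall A, borel d A -> mu (fun x => A (Nat.iter k f x)) = mu A.
Proof.
  intros Hf Hi. induction k; intros A HA. simpl; auto.
  simpl. rewrite (IHk (fun y => A (f y))). now apply Hi. now apply borel_pre.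
Qed.

End Inv.

Definition ind {X} (K : X -> Prop) (D : R) (u : X) : R :=
  if excluded_middle_informative (K u) then 0 else D.

Lemma ind_bounds {X} (K : X -> Prop) D u : 0 <= D -> 0 <= ind K D u <= D.
Proof. intro. unfold ind. destruct (excluded_middle_informative (K u)); lra. Qed.

Lemma ind_zero {X} (K : X -> Prop) D u : K u -> ind K D u = 0.
Proof. intro h. unfold ind. destruct (excluded_middle_informative (K u)); tauto. Qed.

Lemma lip_sum N (a b e e' : nat -> R) L c :
  (forall k, a k <= L * b k + c + e k + e' k) ->
  sumR N a <= L * sumR N b + INR N * c + sumR N e + sumR N e'.
Proof.
  intro H. induction N. simpl. lra. simpl sumR. rewrite S_INR. specialize (H N). lra.
Qed.

Lemma term_bound {X Y} (dX : X -> X -> R) (dY : Y -> Y -> R) (Phi : X -> Y) K D eta rho u u' :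
  0 < D -> 0 < eta -> (forall y y', dY y y' <= D) -> (forall x x', 0 <= dX x x') -> 0 <= rho ->
  (forall x x', K x -> K x' -> dX x x' < eta -> dY (Phi x) (Phi x') < rho) ->
  dY (Phi u) (Phi u') <= (D / eta) * dX u u' + rho + ind K D u + ind K D u'.
Proof.
  intros HD He Hb Hg Hr Hu.
  assert (0 <= D / eta * dX u u') by (apply Rmult_le_pos; [apply Rlt_le, Rdiv_lt_0_compat|]; auto).
  pose proof (ind_bounds K D u (Rlt_le _ _ HD)). pose proof (ind_bounds K D u' (Rlt_le _ _ HD)).
  pose proof (Hb (Phi u) (Phi u')).
  destruct (classic (K u)) as [h|h]. 2:{ unfold ind at 1. destruct (excluded_middle_informative (K u)); [tauto|lra]. }
  destruct (classic (K u')) as [h'|h']. 2:{ unfold ind at 2. destruct (excluded_middle_informative (K u')); [tauto|lra]. }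
  rewrite (ind_zero K D u h), (ind_zero K D u' h').
  destruct (Rlt_le_dec (dX u u') eta) as [hl|hl].
  - pose proof (Hu u u' h h' hl). lra.
  - assert (D <= D / eta * dX u u').
    { unfold Rdiv. rewrite Rmult_assoc. rewrite <- (Rmult_1_r D) at 1. apply Rmult_le_compat_l. lra.
      apply (Rmult_le_reg_l eta). auto. rewrite <- Rmult_assoc, Rinv_r by lra. lra. }
    lra.
Qed.

Theorem mainTheorem5
  (X Y : Type) (dX : X -> X -> R) (mu : (X -> Prop) -> R) (T Tinv : X -> X)
  (dY : Y -> Y -> R) (nu : (Y -> Prop) -> R) (S Sinv : Y -> Y) (Phi : X -> Y)
  (HX : cmpp_system dX mu T Tinv) (HY : cmpp_system dY nu S Sinv)
  (HPhi : borel_factor_map dX mu T dY nu S Phi)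
  (eps : R) (Heps : 0 < eps) :
  exists L : R, exists N0 : nat, forall N : nat, (N0 <= N)%nat ->
    exists X0 : X -> Prop,
      is_compact dX X0 /\ mu X0 > 1 - eps /\
      continuous_on dX dY Phi X0 /\
      almost_lipschitz_on (d_past dX Tinv N) (d_past dY Sinv N) Phi X0 (eps * INR N) L /\
      almost_lipschitz_on (d_future dX T N) (d_future dY S N) Phi X0 (eps * INR N) L.
Proof.
  destruct HX as [HdX [HcX [[HTc [HTic [HTiT HTTi]]] [Hmu Hinv]]]].
  destruct HY as [HdY [HcY [[HSc [HSic [HSiS HSSi]]] [Hnu _]]]].
  destruct HPhi as [HPm [[Z [HZb [HZ0 HZ]]] _]].
  destruct (bounded dY HdY HcY) as [D [HD HDb]].
  set (delta := eps * eps / (4 * (eps + 8 * D))).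
  assert (Hdel : 0 < delta) by (unfold delta; apply Rdiv_lt_0_compat; nra).
  assert (Hdel2 : delta * (eps + 8 * D) = eps * eps / 4) by (unfold delta; field; lra).
  destruct (lusin dX HdX HcX mu Hmu dY HdY HcY Phi HPm delta Hdel) as [K [HK [HKm HKu]]].
  destruct (HKu (eps / 4)) as [eta [Heta Hu]]. lra.
  exists (D / eta), 0%nat. intros N _.
  destruct (floor_nat (eps * INR N / (4 * D))) as [m [Hm1 Hm2]].
  { apply Rmult_le_pos. pose proof (pos_INR N); nra. apply Rlt_le, Rinv_0_lt_compat; lra. }
  assert (HinvI : forall A, borel dX A -> mu (fun x => A (Tinv x)) = mu A).
  { intros A HA. rewrite <- (Hinv (fun x => A (Tinv x))) by (apply borel_pre; auto).
    apply mu_ext. intro x. rewrite HTiT. tauto. }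
  assert (HKb : borel dX K) by (apply closed_borel; auto).
  assert (HnKb : borel dX (fun x => ~ K x)) by (apply borel_compl; auto).
  set (BF := fun k x => ~ K (Nat.iter k T x)).
  set (BP := fun k x => ~ K (Nat.iter (Datatypes.S k) Tinv x)).
  assert (HBF : forall k, borel dX (BF k)) by (intro k; apply (borel_iter dX T k HTc (fun y => ~ K y)); auto).
  assert (HBP : forall k, borel dX (BP k)) by (intro k; apply (borel_iter dX Tinv (Datatypes.S k) HTic (fun y => ~ K y)); auto).
  assert (HmBF : forall k, mu (BF k) = mu (fun x => ~ K x)) by (intro k; apply (mu_iter dX mu T k HTc Hinv (fun y => ~ K y)); auto).
  assert (HmBP : forall k, mu (BP k) = mu (fun x => ~ K x)) by (intro k; apply (mu_iter dX mu Tinv (Datatypes.S k) HTic HinvI (fun y => ~ K y)); auto).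
  set (ZF := fun x => exists k, Z (Nat.iter k T x)).
  set (ZP := fun x => exists k, Z (Nat.iter (Datatypes.S k) Tinv x)).
  assert (HZF : borel dX ZF /\ mu ZF = 0).
  { split. apply borel_cunion. intro k. apply (borel_iter dX T k HTc Z); auto.
    apply (mu_null_cunion dX mu Hmu (fun k x => Z (Nat.iter k T x))). intro k. apply (borel_iter dX T k HTc Z); auto.
    intro k. rewrite (mu_iter dX mu T k HTc Hinv Z); auto. }
  assert (HZP : borel dX ZP /\ mu ZP = 0).
  { split. apply borel_cunion. intro k. apply (borel_iter dX Tinv (Datatypes.S k) HTic Z); auto.
    apply (mu_null_cunion dX mu Hmu (fun k x => Z (Nat.iter (Datatypes.S k) Tinv x))). intro k. apply (borel_iter dX Tinv (Datatypes.S k) HTic Z); auto.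
    intro k. rewrite (mu_iter dX mu Tinv (Datatypes.S k) HTic HinvI Z); auto. }
  set (AF := atl BF N (Datatypes.S m)). set (AP := atl BP N (Datatypes.S m)).
  assert (HAF : borel dX AF) by (apply atl_borel; auto).
  assert (HAP : borel dX AP) by (apply atl_borel; auto).
  assert (HmA : forall (B : nat -> X -> Prop), (forall k, borel dX (B k)) -> (forall k, mu (B k) = mu (fun x => ~ K x)) ->
            eps * mu (atl B N (Datatypes.S m)) <= 4 * D * delta).
  { intros B HB HmB. pose proof (markov dX mu Hmu N B (fun _ => True) (Datatypes.S m) HB (borel_True dX)) as Hk.
    cbv beta in Hk.
    rewrite (mu_ext mu (fun x => atl B N (Datatypes.S m) x /\ True) (atl B N (Datatypes.S m))) in Hk by (intro; tauto).
    rewrite (sumR_ext N _ (fun _ => mu (fun x => ~ K x))) in Hk.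
    2:{ intro k. rewrite <- (HmB k). apply mu_ext; intro; tauto. }
    rewrite sumR_const in Hk.
    pose proof (mu_ge0 dX mu Hmu _ (atl_borel dX N B (Datatypes.S m) HB)).
    pose proof (mu_ge0 dX mu Hmu _ HnKb). pose proof (pos_INR N). pose proof (pos_INR m).
    rewrite S_INR in Hk.
    assert (HN : eps * INR N < 4 * D * (INR m + 1)).
    { assert (eps * INR N / (4 * D) * (4 * D) = eps * INR N) by (field; lra). nra. }
    assert (Q1 : INR N * mu (fun x => ~ K x) <= INR N * delta) by (apply Rmult_le_compat_l; lra).
    assert (Q2 : eps * ((INR m + 1) * mu (atl B N (Datatypes.S m))) <= eps * (INR N * delta)) by (apply Rmult_le_compat_l; lra).
    assert (Q3 : eps * (INR N * delta) <= 4 * D * (INR m + 1) * delta).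
    { rewrite <- Rmult_assoc. apply Rmult_le_compat_r; lra. }
    assert (Q4 : (INR m + 1) * (eps * mu (atl B N (Datatypes.S m))) <= (INR m + 1) * (4 * D * delta)) by lra.
    apply Rmult_le_reg_l in Q4; lra. }
  pose proof (HmA BF HBF HmBF) as HmAF. pose proof (HmA BP HBP HmBP) as HmAP.
  change (atl BF N (Datatypes.S m)) with AF in HmAF. change (atl BP N (Datatypes.S m)) with AP in HmAP.
  set (G := fun x => K x /\ ~ AF x /\ ~ AP x /\ ~ ZF x /\ ~ ZP x).
  assert (HG : borel dX G).
  { destruct HZF, HZP. unfold G. repeat apply borel_inter; auto; apply borel_compl; auto. }
  assert (HmG : 1 - eps / 4 <= mu G).
  { destruct HZF as [HZFb HZFm]. destruct HZP as [HZPb HZPm].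
    assert (mu (fun x => ~ G x) <= mu (fun x => ~ K x) + mu AF + mu AP + mu ZF + mu ZP).
    { rewrite (mu_ext mu (fun x => ~ G x) (fun x => (((~ K x \/ AF x) \/ AP x) \/ ZF x) \/ ZP x)).
      2:{ intro x. unfold G. destruct (classic (K x)), (classic (AF x)), (classic (AP x)), (classic (ZF x)), (classic (ZP x)); tauto. }
      eapply Rle_trans. apply (mu_sub2 dX mu Hmu); repeat apply borel_union; auto.
      eapply Rle_trans. apply Rplus_le_compat_r. apply (mu_sub2 dX mu Hmu); repeat apply borel_union; auto.
      eapply Rle_trans. apply Rplus_le_compat_r, Rplus_le_compat_r. apply (mu_sub2 dX mu Hmu); repeat apply borel_union; auto.
      eapply Rle_trans. apply Rplus_le_compat_r, Rplus_le_compat_r, Rplus_le_compat_r. apply (mu_sub2 dX mu Hmu); auto.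
      lra. }
    rewrite (mu_compl dX mu Hmu G HG) in H.
    rewrite HZFm, HZPm in H.
    assert (Q1 : eps * mu (fun x => ~ K x) <= eps * delta) by (apply Rmult_le_compat_l; lra).
    assert (Q0 : eps * (1 - mu G) <= eps * (mu (fun x => ~ K x) + mu AF + mu AP + 0 + 0)) by (apply Rmult_le_compat_l; lra).
    assert (Q2 : eps * (1 - mu G) <= eps * (eps / 4)) by lra.
    apply Rmult_le_reg_l in Q2; lra. }
  destruct (inner_reg dX HdX mu Hmu G HG (eps / 2)) as [X0 [HX0c [HX0G HX0m]]]. lra.
  assert (HX0b : borel dX X0) by (apply closed_borel; auto).
  assert (HX0K : forall x, X0 x -> K x) by (intros x h; apply (HX0G x h)).
  assert (EF : forall x, ~ ZF x -> forall k, Phi (Nat.iter k T x) = Nat.iter k S (Phi x)).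
  { intros x hx k. induction k. reflexivity. simpl. rewrite HZ, IHk; auto. intro h; apply hx; exists k; auto. }
  assert (EP : forall x, ~ ZP x -> forall k, Phi (Nat.iter k Tinv x) = Nat.iter k Sinv (Phi x)).
  { intros x hx k. induction k. reflexivity. simpl. rewrite <- IHk.
    set (y := Nat.iter k Tinv x).
    assert (hz : ~ Z (Tinv y)) by (intro h; apply hx; exists k; exact h).
    pose proof (HZ (Tinv y) hz). rewrite HTTi in H. rewrite H, HSiS. auto. }
  assert (HDm : 2 * (D * INR m) <= eps * INR N / 2).
  { assert (D * INR m <= D * (eps * INR N / (4 * D))) by (apply Rmult_le_compat_l; lra).
    assert (D * (eps * INR N / (4 * D)) = eps * INR N / 4) by (field; lra). lra. }
  assert (Hpos : forall x x', 0 <= dX x x') by (intros; apply (d_ge0 dX HdX)).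
  exists X0. split; [|split; [|split; [|split]]].
  - apply closed_compact; auto.
  - rewrite (mu_diff dX mu Hmu G X0 HG HX0b HX0G) in HX0m. lra.
  - intros x hx rho Hrho. destruct (HKu rho Hrho) as [et [Het Hu']]. exists et. split; [exact Het|].
    intros y hy Hxy. apply Hu'; auto.
  - intros x x' hx hx'. destruct (HX0G x hx) as [_ [_ [hAP [_ hZP]]]]. destruct (HX0G x' hx') as [_ [_ [hAP' [_ hZP']]]].
    unfold d_past.
    rewrite (sumR_ext N (fun k => dY (Nat.iter (Datatypes.S k) Sinv (Phi x)) (Nat.iter (Datatypes.S k) Sinv (Phi x'))) (fun k => dY (Phi (Nat.iter (Datatypes.S k) Tinv x)) (Phi (Nat.iter (Datatypes.S k) Tinv x')))).
    2:{ intro k. rewrite !EP; auto. }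
    eapply Rle_trans. apply (lip_sum N (fun k => dY (Phi (Nat.iter (Datatypes.S k) Tinv x)) (Phi (Nat.iter (Datatypes.S k) Tinv x'))) (fun k => dX (Nat.iter (Datatypes.S k) Tinv x) (Nat.iter (Datatypes.S k) Tinv x')) (fun k => ind K D (Nat.iter (Datatypes.S k) Tinv x)) (fun k => ind K D (Nat.iter (Datatypes.S k) Tinv x')) (D / eta) (eps / 4)).
    { intro k. apply term_bound; auto. lra. }
    assert (sumR N (fun k => ind K D (Nat.iter (Datatypes.S k) Tinv x)) <= D * INR m).
    { apply (count_bound N BP x m). lra. intro; apply ind_bounds; lra. intros k h. apply ind_zero. apply NNPP; exact h. exact hAP. }
    assert (sumR N (fun k => ind K D (Nat.iter (Datatypes.S k) Tinv x')) <= D * INR m).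
    { apply (count_bound N BP x' m). lra. intro; apply ind_bounds; lra. intros k h. apply ind_zero. apply NNPP; exact h. exact hAP'. }
    pose proof (pos_INR N). nra.
  - intros x x' hx hx'. destruct (HX0G x hx) as [_ [hAF [_ [hZF _]]]]. destruct (HX0G x' hx') as [_ [hAF' [_ [hZF' _]]]].
    unfold d_future.
    rewrite (sumR_ext N (fun k => dY (Nat.iter k S (Phi x)) (Nat.iter k S (Phi x'))) (fun k => dY (Phi (Nat.iter k T x)) (Phi (Nat.iter k T x')))).
    2:{ intro k. rewrite !EF; auto. }
    eapply Rle_trans. apply (lip_sum N (fun k => dY (Phi (Nat.iter k T x)) (Phi (Nat.iter k T x'))) (fun k => dX (Nat.iter k T x) (Nat.iter k T x')) (fun k => ind K D (Nat.iter k T x)) (fun k => ind K D (Nat.iter k T x')) (D / eta) (eps / 4)).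
    { intro k. apply term_bound; auto. lra. }
    assert (sumR N (fun k => ind K D (Nat.iter k T x)) <= D * INR m).
    { apply (count_bound N BF x m). lra. intro; apply ind_bounds; lra. intros k h. apply ind_zero. apply NNPP; exact h. exact hAF. }
    assert (sumR N (fun k => ind K D (Nat.iter k T x')) <= D * INR m).
    { apply (count_bound N BF x' m). lra. intro; apply ind_bounds; lra. intros k h. apply ind_zero. apply NNPP; exact h. exact hAF'. }
    pose proof (pos_INR N). nra.
Qed.
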